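(* Let ${\bm G}$ be a random matrix in $\mathbb{R}^{m\times n}$ with $\mathbb{E}[{\bm G}]={\bm M}$ and $\mathbb{E}[\|{\bm G}-{\bm M}\|_F^\alpha]\le\sigma^\alpha$ for some $\alpha\in(1,2]$ and $\sigma>0$, and let $\tau>0$, $d=\min\{m,n\}$. Then $$\mathbb{E}\big[\|\mathcal{C}_\tau({\bm G})\|_F^2\big]\le 2\|{\bm M}\|_F^2+2^{4-\alpha}d^{1-\alpha/2}\tau^{2-\alpha}\sigma^\alpha.$$ (In the paper this is applied conditionally on ${\bm X}_k$ with ${\bm G}={\bm G}_k$ and ${\bm M}=\nabla f({\bm X}_k)$.)
   Context: $\|\cdot\|_F$ is the Frobenius norm. Spectral clipping: for ${\bm G}\in\mathbb{R}^{m\times n}$ with (thin) SVD ${\bm G}={\bm U}\,\mathrm{diag}(\sigma_1,\dots,\sigma_d){\bm V}^\top$, $d=\min\{m,n\}$, and threshold $\tau>0$, define $\mathcal{C}_\tau({\bm G}):={\bm U}\,\mathrm{diag}(\min\{\sigma_1,\tau\},\dots,\min\{\sigma_d,\tau\}){\bm V}^\top$. *)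

(* Defs.v *)
From HB Require Import structures.
From mathcomp Require Import all_boot all_order all_algebra.
From mathcomp Require Import all_classical all_reals all_analysis.
Set Implicit Arguments. Unset Strict Implicit. Unset Printing Implicit Defensive.
Import Order.TTheory GRing.Theory Num.Theory.
Local Open Scope ring_scope.

Definition frob (R : realType) (m n : nat) (A : 'M[R]_(m, n)) : R :=
  Num.sqrt (\sum_(i < m) \sum_(j < n) A i j ^+ 2).

Definition is_thin_svd (R : realType) (m n : nat) (G : 'M[R]_(m, n))
  (U : 'M[R]_(m, minn m n)) (s : 'rV[R]_(minn m n)) (V : 'M[R]_(n, minn m n)) :=
  [/\ U^T *m U = 1%:M, V^T *m V = 1%:M, (forall i, 0 <= s ord0 i)
    & G = U *m diag_mx s *m V^T].

Definition is_spectral_clip (R : realType) (m n : nat) (tau : R)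
  (G C : 'M[R]_(m, n)) :=
  exists U s V, is_thin_svd G U s V /\
    C = U *m diag_mx (\row_i Num.min (s ord0 i) tau) *m V^T.

(* C_tau(G): a spectral clipping of G (the thin SVD always exists, and the
   result does not depend on the chosen SVD) *)
Definition spec_clip (R : realType) (m n : nat) (tau : R) (G : 'M[R]_(m, n))
  : 'M[R]_(m, n) :=
  match pselect (exists C, is_spectral_clip tau G C) with
  | left H => projT1 (cid H)
  | right _ => 0
  end.

(* Main.v *)
Set Warnings "-all".
Require Import Defs.
From HB Require Import structures.
From mathcomp Require Import all_boot all_order all_algebra.
From mathcomp Require Import all_classical all_reals all_analysis.
From mathcomp Require Import lra.
From mathcomp Require Import measurable_realfun.
Import Order.TTheory GRing.Theory Num.Theory.
Local Open Scope ring_scope.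

Lemma sumsq_tr (R : realType) m n (A : 'M[R]_(m, n)) :
  \sum_(i < m) \sum_(j < n) A i j ^+ 2 = \tr (A^T *m A).
Proof.
rewrite /mxtrace exchange_big /=; apply: eq_bigr => j _.
rewrite !mxE; apply: eq_bigr => i _; by rewrite mxE expr2.
Qed.

Lemma frob_sq (R : realType) m n (A : 'M[R]_(m, n)) :
  frob A ^+ 2 = \sum_(i < m) \sum_(j < n) A i j ^+ 2.
Proof.
rewrite /frob sqr_sqrtr // sumr_ge0 // => i _; rewrite sumr_ge0 // => j _.
exact: sqr_ge0.
Qed.

Lemma frob_svd (R : realType) m n k (U : 'M[R]_(m, k)) (V : 'M[R]_(n, k))
  (t : 'rV[R]_k) : U^T *m U = 1%:M -> V^T *m V = 1%:M ->
  frob (U *m diag_mx t *m V^T) ^+ 2 = \sum_(i < k) t 0 i ^+ 2.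
Proof.
move=> hU hV; rewrite frob_sq sumsq_tr !trmx_mul trmxK tr_diag_mx.
rewrite -!mulmxA (mulmxA U^T) hU mul1mx.
rewrite mxtrace_mulC -!mulmxA hV mulmx1 mul_diag_mx /mxtrace.
by apply: eq_bigr => i _; rewrite !mxE eqxx mulr1n expr2.
Qed.

Lemma clip_bound (R : realType) m n (tau : R) (G : 'M[R]_(m, n)) : 0 < tau ->
  frob (spec_clip tau G) ^+ 2 <= frob G ^+ 2 /\
  frob (spec_clip tau G) ^+ 2 <= (minn m n)%:R * tau ^+ 2.
Proof.
move=> tau0; rewrite /spec_clip; case: pselect => [H|_]; last first.
  rewrite /frob big1 ?sqrtr0 ?expr0n /=; last by move=> i _; rewrite big1 // => j _; rewrite mxE expr0n.
  split; [exact: sqr_ge0|]; by rewrite mulr_ge0 // sqr_ge0.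
case: (cid H) => C /= [U [s [V [[hU hV s0 ->] ->]]]].
rewrite !frob_svd //; split.
  apply: ler_sum => i _; rewrite mxE ler_sqr ?nnegrE ?le_min ?s0 ?(ltW tau0) //.
  by rewrite ge_min lexx.
have -> : (minn m n)%:R * tau ^+ 2 = \sum_(i < minn m n) tau ^+ 2.
  by rewrite sumr_const card_ord mulr_natl.
apply: ler_sum => i _.
rewrite mxE ler_sqr ?nnegrE ?le_min ?s0 ?(ltW tau0) //.
by rewrite ge_min lexx orbT.
Qed.

Lemma min_interp (R : realType) (a b th : R) : 0 <= a -> 0 <= b ->
  0 <= th -> th <= 1 -> Num.min a b <= a `^ th * b `^ (1 - th).
Proof.
move=> a0 b0 t0 t1; have t1' : 0 <= 1 - th by rewrite subr_ge0.
have hne : (th + (1 - th) == 0) = false by rewrite addrC subrK oner_eq0.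
case: (leP a b) => ab.
- rewrite {1}(_ : a = a `^ (th + (1 - th))); last by rewrite addrC subrK powRr1.
  rewrite powRD ?hne //.
  rewrite ler_wpM2l ?powR_ge0 //; exact: ge0_ler_powR.
- rewrite {1}(_ : b = b `^ (th + (1 - th))); last by rewrite addrC subrK powRr1.
  rewrite powRD ?hne //.
  rewrite ler_wpM2r ?powR_ge0 //; apply: ge0_ler_powR; rewrite ?nnegrE //; exact: ltW.
Qed.

Lemma frob_ge0 (R : realType) m n (A : 'M[R]_(m, n)) : 0 <= frob A.
Proof. exact: sqrtr_ge0. Qed.

Lemma frob_add_sq (R : realType) m n (G M : 'M[R]_(m, n)) :
  frob G ^+ 2 <= 2 * frob M ^+ 2 + 2 * frob (G - M) ^+ 2.
Proof.
rewrite !frob_sq !mulr_sumr -big_split /=; apply: ler_sum => i _.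
rewrite !mulr_sumr -big_split /=; apply: ler_sum => j _.
rewrite !mxE; set a := M i j; set b := G i j - a.
have -> : G i j = a + b by rewrite /b addrC subrK.
have : 0 <= (a - b) ^+ 2 by exact: sqr_ge0.
move=> h; rewrite sqrrD; rewrite sqrrB in h; nra.
Qed.

Lemma pointwise (R : realType) m n (G M : 'M[R]_(m, n)) (alpha tau : R) :
  1 < alpha -> alpha <= 2 -> 0 < tau ->
  frob (spec_clip tau G) ^+ 2 <= 2 * frob M ^+ 2 +
    2 `^ (4 - alpha) * (minn m n)%:R `^ (1 - alpha / 2) * tau `^ (2 - alpha)
    * frob (G - M) `^ alpha.
Proof.
move=> a1 a2 t0; have [c1 c2] := @clip_bound R m n tau G t0.
set x := frob (G - M); set d := (minn m n)%:R.
have x0 : 0 <= x by exact: frob_ge0.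
have d0 : 0 <= d by [].
have th0 : 0 <= alpha / 2 by rewrite divr_ge0 // (le_trans _ (ltW a1)).
have th1 : alpha / 2 <= 1 by rewrite ler_pdivrMr // mul1r.
have hmin := @min_interp R (2 * x ^+ 2) (d * tau ^+ 2) (alpha / 2)
   (mulr_ge0 (ler0n R 2) (sqr_ge0 x)) (mulr_ge0 d0 (sqr_ge0 tau)) th0 th1.
have key : 2 * frob M ^+ 2 + Num.min (2 * x ^+ 2) (d * tau ^+ 2) <=
   2 * frob M ^+ 2 + 2 `^ (4 - alpha) * d `^ (1 - alpha / 2) * tau `^ (2 - alpha) * x `^ alpha.
  rewrite lerD2l (le_trans hmin) //.
  rewrite powRM ?ler0n ?sqr_ge0 // powRM ?sqr_ge0 //.
  rewrite -!(powR_mulrn _ (ltW t0)) -(powR_mulrn _ x0) -!powRrM.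
  have -> : 2 * (alpha / 2) = alpha by rewrite mulrC -mulrA mulVf ?mulr1.
  have -> : 2 * (1 - alpha / 2) = 2 - alpha.
    by rewrite mulrBr mulr1 mulrC -mulrA mulVf ?mulr1.
  rewrite [X in _ <= X]mulrC !mulrA.
  rewrite (mulrC (x `^ alpha)).
  do 3 (apply: ler_wpM2r; first exact: powR_ge0).
  apply: ler_powR; first by rewrite ler1n.
  lra.
apply: le_trans key.
case: (leP (2 * x ^+ 2) (d * tau ^+ 2)) => h.
- apply: (le_trans c1); exact: frob_add_sq.
- apply: (le_trans c2).
  by rewrite lerDr mulr_ge0 // sqr_ge0.
Qed.

Local Open Scope ereal_scope.

Lemma le_integral_nm d (T : measurableType d) (R : realType)
  (mu : {measure set T -> \bar R}) (f g : T -> \bar R) :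
  (forall x, 0 <= f x) -> (forall x, f x <= g x) ->
  \int[mu]_x f x <= \int[mu]_x g x.
Proof.
move=> f0 fg; rewrite !ge0_integralTE //; last by move=> x; exact: le_trans (fg x).
apply: ge_ereal_sup => _ [h hf <-]; apply: ereal_sup_ubound; exists h => //.
by move=> x; exact: le_trans (hf x) (fg x).
Qed.

Local Close Scope ereal_scope.

Theorem mainTheorem4 (R : realType) (dsp : measure_display)
  (Omega : measurableType dsp) (P : probability Omega R)
  (m n : nat) (G : Omega -> 'M[R]_(m, n)) (M : 'M[R]_(m, n))
  (alpha sigma tau : R) :
  (forall i j, measurable_fun setT (fun w => G w i j)) ->
  (forall i j, P.-integrable setT (fun w => (G w i j)%:E)) ->
  (forall i j, (\int[P]_w (G w i j)%:E = (M i j)%:E)%E) ->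
  1 < alpha -> alpha <= 2 -> 0 < sigma ->
  (\int[P]_w ((frob (G w - M)) `^ alpha)%:E <= (sigma `^ alpha)%:E)%E ->
  0 < tau ->
  (\int[P]_w ((frob (spec_clip tau (G w))) ^+ 2)%:E
    <= (2 * frob M ^+ 2
        + 2 `^ (4 - alpha) * (minn m n)%:R `^ (1 - alpha / 2)
          * tau `^ (2 - alpha) * sigma `^ alpha)%:E)%E.
Proof.
move=> mG _ _ a1 a2 s0 hint t0.
Local Open Scope ereal_scope.
set K := (2 `^ (4 - alpha) * (minn m n)%:R `^ (1 - alpha / 2) * tau `^ (2 - alpha))%R.
have K0 : (0 <= K)%R by rewrite /K !mulr_ge0 // powR_ge0.
pose f : Omega -> \bar R := fun w => ((frob (G w - M)) `^ alpha)%:E.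
have m1 : measurable_fun [set: Omega] (fun w => \sum_(i < m) \sum_(j < n) (G w - M) i j ^+ 2)%R.
  apply: measurable_sum => i; apply: measurable_sum => j.
  apply: measurable_funX.
  under eq_fun do rewrite !mxE.
  apply: measurable_funB => //; exact: measurable_cst.
have m2 : measurable_fun [set: Omega] (fun w => frob (G w - M)).
  exact: (measurableT_comp (continuous_measurable_fun (@sqrt_continuous R)) m1).
have m3 : measurable_fun [set: Omega] (fun w => frob (G w - M) `^ alpha)%R.
  exact: (measurableT_comp (measurable_powR alpha) m2).
have mf : measurable_fun [set: Omega] f.
  exact: (measurable_EFinP _ _).2 m3.
apply: (@le_trans _ _ (\int[P]_w ((2 * frob M ^+ 2)%:E + K%:E * f w))).
  apply: le_integral_nm => w; first by rewrite lee_fin sqr_ge0.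
  by rewrite /f -EFinM -EFinD lee_fin; exact: pointwise.
rewrite ge0_integralD //; last 3 first.
- by move=> w _; rewrite lee_fin mulr_ge0 // sqr_ge0.
- by move=> w _; rewrite mule_ge0 // lee_fin powR_ge0.
- exact: measurable_funeM.
rewrite integral_cst //= probability_setT mule1 ge0_integralZl //; last first.
  by move=> w _; rewrite lee_fin powR_ge0.
rewrite EFinD leeD2l // (EFinM K); apply: lee_wpmul2l; [by rewrite lee_fin | exact: hint].
Qed.
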